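(* Let $h:B^d\to{\mathbb R}$ be a $C^2$ function such that $L^{-1}\operatorname{Hess}h$ is $\Gamma$-invariant, i.e. for all $A\in\Gamma$, $x\in B^d$, $X,Y\in{\mathbb R}^d$, $$L(x)^{-1}\operatorname{Hess}h(x)(X,Y)=L(A\cdot x)^{-1}\operatorname{Hess}h(A\cdot x)\big(DA(x)X,DA(x)Y\big),$$ where $DA(x)$ is the differential of $y\mapsto A\cdot y$ at $x$. Then there exists a unique cocycle $\tau\in Z^1(\Gamma,{\mathbb R}^{d,1})$ such that $h$ is $\tau$-equivariant.
   Context: Notation. $B^d$ denotes the open Euclidean unit ball of ${\mathbb R}^d$; $\langle\cdot,\cdot\rangle_d$ and $\|\cdot\|$ are the Euclidean inner product and norm, $L(x)=\sqrt{1-\|x\|^2}$, and $\operatorname{Hess}$ is the Euclidean Hessian. Minkowski space ${\mathbb R}^{d,1}$ is ${\mathbb R}^{d+1}$ with $\langle x,y\rangle_{d,1}=x_1y_1+\dots+x_dy_d-x_{d+1}y_{d+1}$; for $v\in{\mathbb R}^{d,1}$ write $v=(\bar v,v_{d+1})$. $O_+(d,1)$ is the group of linear maps preserving $\langle\cdot,\cdot\rangle_{d,1}$ and the sheet $\{\langle x,x\rangle_{d,1}=-1,\ x_{d+1}>0\}$. For $A\in O_+(d,1)$, $x\in B^d$, $A\cdot x\in B^d$ is the unique point with $A\binom{x}{1}\in{\mathbb R}_{>0}\binom{A\cdot x}{1}$; this is an isometry of the Klein metric $g_{{\mathbb H}^d}(x)(X,Y)=L(x)^{-2}\langle X,Y\rangle_d+L(x)^{-4}\langle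 x,X\rangle_d\langle x,Y\rangle_d$. Action on functions. $((A,v)h)(x)=\frac{L(x)}{L(A^{-1}\cdot x)}h(A^{-1}\cdot x)+\langle x,\bar v\rangle_d-v_{d+1}$. Group setup. $d\ge2$ and $\Gamma\subset O_+(d,1)$ is a subgroup such that the action $x\mapsto A\cdot x$ of $\Gamma$ on $B^d$ is free, properly discontinuous and cocompact, so that $M_\Gamma=(B^d,g_{{\mathbb H}^d})/\Gamma$ is a compact oriented hyperbolic manifold. A cocycle is a map $\tau:\Gamma\to{\mathbb R}^{d,1}$ with $\tau(AB)=\tau(A)+A\tau(B)$; they form the vector space $Z^1(\Gamma,{\mathbb R}^{d,1})$. For a cocycle $\tau$, a continuous $h:B^d\to{\mathbb R}$ is $\tau$-equivariant if $(A,\tau(A))h=h$ for all $A\in\Gamma$. *)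

(* Defs.v *)
From Stdlib Require Import Reals List.
From mathcomp Require Import ssreflect ssrfun ssrbool eqtype ssrnat seq fintype bigop.
Set Implicit Arguments. Unset Strict Implicit.
Open Scope R_scope.

Definition vec (n : nat) := 'I_n -> R.
Definition rsum n (F : 'I_n -> R) : R := \big[Rplus/R0]_(i < n) F i.
Definition dot n (x y : vec n) : R := rsum (fun i => x i * y i).
Definition vadd n (x y : vec n) : vec n := fun i => x i + y i.
Definition vsub n (x y : vec n) : vec n := fun i => x i - y i.
Definition vscale n (t : R) (x : vec n) : vec n := fun i => t * x i.
Definition enorm n (x : vec n) : R := sqrt (dot x x).
Definition basis n (i : 'I_n) : vec n := fun j => if j == i then 1 else 0.

Definition in_ball d (x : vec d) : Prop := dot x x < 1.
Definition Lf d (x : vec d) : R := sqrt (1 - dot x x).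

(* Minkowski space R^{d,1} = vec d.+1, last coordinate (ord_max) is x_{d+1} *)
Definition vbar d (v : vec d.+1) : vec d := fun i => v (widen_ord (leqnSn d) i).
Definition vlast d (v : vec d.+1) : R := v ord_max.
Definition mink d (v w : vec d.+1) : R := dot (vbar v) (vbar w) - vlast v * vlast w.
(* (x, 1) *)
Definition hom d (x : vec d) : vec d.+1 :=
  fun i => match (insub (nat_of_ord i) : option 'I_d) with Some j => x j | None => 1 end.

Definition mmat d := 'I_d.+1 -> 'I_d.+1 -> R.
Definition mapp d (A : mmat d) (v : vec d.+1) : vec d.+1 :=
  fun i => rsum (fun j => A i j * v j).
Definition mmul d (A B : mmat d) : mmat d :=
  fun i k => rsum (fun j => A i j * B j k).
Definition mid (d : nat) : mmat d := fun i j => if i == j then 1 else 0.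
Arguments mid : clear implicits.

Definition in_Oplus d (A : mmat d) : Prop :=
  (forall v w, mink (mapp A v) (mapp A w) = mink v w) /\
  (forall v, mink v v = -1 -> vlast v > 0 -> vlast (mapp A v) > 0).

(* A . x : the point with A (x,1) in R_{>0} (A.x, 1) *)
Definition act d (A : mmat d) (x : vec d) : vec d :=
  fun i => vbar (mapp A (hom x)) i / vlast (mapp A (hom x)).

Definition is_subgroup d (G : mmat d -> Prop) : Prop :=
  (forall A, G A -> in_Oplus A) /\ G (mid d) /\
  (forall A B, G A -> G B -> G (mmul A B)) /\
  (forall A, G A -> exists B, G B /\ mmul A B = mid d /\ mmul B A = mid d).

Definition free_action d (G : mmat d -> Prop) : Prop :=
  forall A x, G A -> in_ball x -> act A x = x -> A = mid d.

Definition vconv d (u : nat -> vec d) (l : vec d) : Prop :=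
  forall eps, eps > 0 -> exists N : nat, forall n : nat, (N <= n)%N -> enorm (vsub (u n) l) < eps.

Definition compact_set d (K : vec d -> Prop) : Prop :=
  forall u : nat -> vec d, (forall n, K (u n)) ->
  exists phi : nat -> nat, (forall n, (phi n < phi n.+1)%N) /\
    exists l, K l /\ vconv (fun n => u (phi n)) l.

Definition prop_discontinuous d (G : mmat d -> Prop) : Prop :=
  forall K : vec d -> Prop, compact_set K -> (forall x, K x -> in_ball x) ->
  exists l : list (mmat d), forall A, G A -> (exists x, K x /\ K (act A x)) -> In A l.

Definition cocompact d (G : mmat d -> Prop) : Prop :=
  exists K : vec d -> Prop, compact_set K /\ (forall x, K x -> in_ball x) /\
    forall x, in_ball x -> exists A, G A /\ K (act A x).

Definition has_partial d (f : vec d -> R) (i : 'I_d) (x : vec d) (l : R) : Prop :=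
  derivable_pt_lim (fun t => f (vadd x (vscale t (basis i)))) 0 l.

Definition cont_on_ball d (f : vec d -> R) : Prop :=
  forall x, in_ball x -> forall eps, eps > 0 -> exists delta, delta > 0 /\
    forall y, in_ball y -> enorm (vsub y x) < delta -> Rabs (f y - f x) < eps.

(* h is C^2 on B^d, with first partials Dh i = d_i h and second partials
   D2h i j = d_j d_i h *)
Definition C2_with d (h : vec d -> R) (Dh : 'I_d -> vec d -> R)
    (D2h : 'I_d -> 'I_d -> vec d -> R) : Prop :=
  cont_on_ball h /\ (forall i, cont_on_ball (Dh i)) /\
  (forall i j, cont_on_ball (D2h i j)) /\
  (forall i x, in_ball x -> has_partial h i x (Dh i x)) /\
  (forall i j x, in_ball x -> has_partial (Dh i) j x (D2h i j x)).

Definition Hess d (D2h : 'I_d -> 'I_d -> vec d -> R) (x X Y : vec d) : R :=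
  rsum (fun i => rsum (fun j => D2h i j x * X i * Y j)).

Definition has_dir_deriv d (F : vec d -> vec d) (x X V : vec d) : Prop :=
  forall i, derivable_pt_lim (fun t => F (vadd x (vscale t X)) i) 0 (V i).

Definition cocycle d (G : mmat d -> Prop) (tau : mmat d -> vec d.+1) : Prop :=
  forall A B, G A -> G B -> tau (mmul A B) = vadd (tau A) (mapp A (tau B)).

(* (A, tau A) h = h on B^d, where B = A^{-1} *)
Definition equivariant d (G : mmat d -> Prop) (tau : mmat d -> vec d.+1)
    (h : vec d -> R) : Prop :=
  forall A, G A -> forall B, mmul A B = mid d -> forall x, in_ball x ->
    Lf x / Lf (act B x) * h (act B x) + dot x (vbar (tau A)) - vlast (tau A) = h x.

(* Main.v *)
Require Import Defs.
From Stdlib Require Import Reals List Lra FunctionalExtensionality ClassicalEpsilon Classical.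
From HB Require Import structures.
From mathcomp Require Import ssreflect ssrfun ssrbool eqtype ssrnat seq fintype bigop.
From Coquelicot Require Import Coquelicot.
Set Implicit Arguments. Unset Strict Implicit.
Open Scope R_scope.
Set Warnings "-notation-overridden,-redundant-canonical-projection,-ambiguous-paths".

HB.instance Definition _ := Monoid.isComLaw.Build R R0 Rplus
  (fun a b c => esym (Rplus_assoc a b c)) Rplus_comm Rplus_0_l.

Section Rsum.
Variable n : nat.
Implicit Types F G : 'I_n -> R.

Lemma rsum_ext F G : (forall i, F i = G i) -> rsum F = rsum G.
Proof. move=> H; rewrite /rsum; apply: eq_bigr => i _; exact: H. Qed.

Lemma rsum_add F G : rsum (fun i => F i + G i) = rsum F + rsum G.
Proof. by rewrite /rsum big_split. Qed.

Lemma rsum_scal c F : c * rsum F = rsum (fun i => c * F i).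
Proof.
rewrite /rsum; apply: (big_rec2 (fun y1 y2 => c * y1 = y2)); first by ring.
by move=> i y1 y2 _ <-; ring.
Qed.

Lemma rsum0 : rsum (fun _ : 'I_n => 0) = 0.
Proof. by rewrite /rsum big1. Qed.

Lemma rsum_le F G : (forall i, F i <= G i) -> rsum F <= rsum G.
Proof.
move=> H; rewrite /rsum; apply: (big_rec2 (fun y1 y2 => y1 <= y2)); first lra.
move=> i y1 y2 _ h; have := H i; lra.
Qed.

Lemma rsum_abs F : Rabs (rsum F) <= rsum (fun i => Rabs (F i)).
Proof.
rewrite /rsum; apply: (big_rec2 (fun y1 y2 => Rabs y1 <= y2)).
  by rewrite Rabs_R0; lra.
move=> i y1 y2 _ h; apply: Rle_trans (Rabs_triang _ _) _; lra.
Qed.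

Lemma rsum_const c : rsum (fun _ : 'I_n => c) = INR n * c.
Proof.
rewrite /rsum big_const_ord; elim: n => [|m IH] /=; first ring.
rewrite IH; case: m IH => [|m] _ /=; ring.
Qed.

Lemma rsum_term F i : (forall j, 0 <= F j) -> F i <= rsum F.
Proof.
move=> H; rewrite /rsum (bigD1 i) //=.
rewrite -[X in X <= _]Rplus_0_r; apply: Rplus_le_compat_l.
apply: (big_rec (fun y => 0 <= y)); first lra.
move=> j y _ h; have := H j; lra.
Qed.

Lemma rsum_delta F i : rsum (fun j => (if j == i then 1 else 0) * F j) = F i.
Proof.
rewrite /rsum (bigD1 i) //= eqxx big1 ?Rmult_1_l ?Rplus_0_r //.
by move=> j /negbTE ->; ring.
Qed.

Lemma rsum_delta' F i : rsum (fun j => F j * (if j == i then 1 else 0)) = F i.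
Proof.
rewrite -(rsum_delta F i); apply: rsum_ext => j; ring.
Qed.

End Rsum.

Lemma rsum_swap n m (F : 'I_n -> 'I_m -> R) :
  rsum (fun i => rsum (fun j => F i j)) = rsum (fun j => rsum (fun i => F i j)).
Proof. by rewrite /rsum exchange_big. Qed.

Lemma rsum_recr n (F : 'I_n.+1 -> R) :
  rsum F = rsum (fun k : 'I_n => F (widen_ord (leqnSn n) k)) + F ord_max.
Proof. by rewrite /rsum big_ord_recr. Qed.

Definition mkv d (a : vec d) (r : R) : vec d.+1 :=
  fun i => match (insub (nat_of_ord i) : option 'I_d) with Some j => a j | None => r end.

Lemma hom_mkv d (x : vec d) : hom x = mkv x 1.
Proof. by []. Qed.

Lemma vbar_mkv d (a : vec d) r : vbar (mkv a r) = a.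
Proof.
apply: functional_extensionality => k; rewrite /vbar /mkv /=.
case: insubP => [k' _ e|].
  by congr a; apply: val_inj; rewrite e.
by rewrite ltn_ord.
Qed.

Lemma vlast_mkv d (a : vec d) r : vlast (mkv a r) = r.
Proof. by rewrite /vlast /mkv /= insubN // ltnn. Qed.

Lemma vec_eq d (v w : vec d.+1) : vbar v = vbar w -> vlast v = vlast w -> v = w.
Proof.
move=> H1 H2; apply: functional_extensionality => i.
case: (ltnP i d) => hi.
  have -> : i = widen_ord (leqnSn d) (Ordinal hi) by apply: val_inj.
  by have := f_equal (fun f => f (Ordinal hi)) H1.
have -> : i = ord_max by apply: val_inj => /=; apply/eqP; rewrite eqn_leq hi -ltnS ltn_ord.
exact: H2.
Qed.

Lemma mkv_eta d (v : vec d.+1) : v = mkv (vbar v) (vlast v).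
Proof. by apply: vec_eq; rewrite ?vbar_mkv ?vlast_mkv. Qed.

Lemma rsum_scalr n (F : 'I_n -> R) c : rsum F * c = rsum (fun i => F i * c).
Proof. rewrite Rmult_comm rsum_scal; apply: rsum_ext => i; ring. Qed.

Lemma mapp_vadd d (A : mmat d) v w : mapp A (vadd v w) = vadd (mapp A v) (mapp A w).
Proof.
apply: functional_extensionality => i; rewrite /mapp /vadd -rsum_add.
by apply: rsum_ext => j; ring.
Qed.

Lemma mapp_vscale d (A : mmat d) c v : mapp A (vscale c v) = vscale c (mapp A v).
Proof.
apply: functional_extensionality => i; rewrite /mapp /vscale rsum_scal.
by apply: rsum_ext => j; ring.
Qed.

Lemma mapp_mmul d (A B : mmat d) v : mapp (mmul A B) v = mapp A (mapp B v).
Proof.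
apply: functional_extensionality => i; rewrite /mapp /mmul.
rewrite (rsum_ext (G := fun j => rsum (fun k => A i k * B k j * v j))); last first.
  by move=> j; rewrite rsum_scalr.
rewrite rsum_swap; apply: rsum_ext => k; rewrite rsum_scal; apply: rsum_ext => j; ring.
Qed.

Lemma mapp_mid d v : mapp (mid d) v = v.
Proof.
apply: functional_extensionality => i; rewrite /mapp /mid.
rewrite -(rsum_delta v i); apply: rsum_ext => j.
by rewrite (eq_sym i j).
Qed.

Lemma dot_sym n (x y : vec n) : dot x y = dot y x.
Proof. by apply: rsum_ext => i; ring. Qed.

Lemma dot_vaddl n (x y z : vec n) : dot (vadd x y) z = dot x z + dot y z.
Proof. rewrite /dot -rsum_add; apply: rsum_ext => i; rewrite /vadd; ring. Qed.

Lemma dot_vscalel n c (x z : vec n) : dot (vscale c x) z = c * dot x z.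
Proof. rewrite /dot rsum_scal; apply: rsum_ext => i; rewrite /vscale; ring. Qed.

Lemma dot_vaddr n (x y z : vec n) : dot z (vadd x y) = dot z x + dot z y.
Proof. by rewrite dot_sym dot_vaddl !(dot_sym z). Qed.

Lemma dot_vscaler n c (x z : vec n) : dot z (vscale c x) = c * dot z x.
Proof. by rewrite dot_sym dot_vscalel dot_sym. Qed.

Lemma dot_basis n (x : vec n) i : dot (basis i) x = x i.
Proof. rewrite /dot /basis -(rsum_delta x i); by apply: rsum_ext. Qed.

Lemma dot_zero n (x : vec n) : dot (fun _ => 0) x = 0.
Proof. rewrite /dot (rsum_ext (G := fun _ => 0)) ?rsum0 // => j; ring. Qed.

Lemma mink_mkv d (a : vec d) r w : mink (mkv a r) w = dot a (vbar w) - r * vlast w.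
Proof. by rewrite /mink vbar_mkv vlast_mkv. Qed.

Lemma mink_vaddl d (u v w : vec d.+1) : mink (vadd u v) w = mink u w + mink v w.
Proof.
rewrite /mink (_ : vbar (vadd u v) = vadd (vbar u) (vbar v)) // dot_vaddl.
rewrite /vlast /vadd; ring.
Qed.

Lemma mink_vscalel d c (u w : vec d.+1) : mink (vscale c u) w = c * mink u w.
Proof.
rewrite /mink (_ : vbar (vscale c u) = vscale c (vbar u)) // dot_vscalel.
rewrite /vlast /vscale; ring.
Qed.

Lemma mink_sym d (u w : vec d.+1) : mink u w = mink w u.
Proof. by rewrite /mink dot_sym Rmult_comm. Qed.

Lemma mink_vaddr d (u v w : vec d.+1) : mink w (vadd u v) = mink w u + mink w v.
Proof. by rewrite mink_sym mink_vaddl !(mink_sym w). Qed.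

Lemma mink_vscaler d c (u w : vec d.+1) : mink w (vscale c u) = c * mink w u.
Proof. by rewrite mink_sym mink_vscalel mink_sym. Qed.

Lemma mink_hom_zero d (u : vec d.+1) :
  (forall z, in_ball z -> mink (hom z) u = 0) -> u = fun _ => 0.
Proof.
move=> H.
have h0 : vlast u = 0.
  have := H (fun _ => 0); rewrite hom_mkv mink_mkv dot_zero.
  rewrite /in_ball dot_zero => /(_ Rlt_0_1); lra.
apply: vec_eq => //; apply: functional_extensionality => i.
have := H (vscale (/2) (basis i)).
rewrite hom_mkv mink_mkv dot_vscalel dot_basis h0 /in_ball dot_vscalel dot_vscaler.
rewrite dot_basis /basis eqxx.
move=> /(_ ltac:(lra)); rewrite /vbar /= => h; lra.
Qed.

Lemma mink_hom d (z : vec d) : mink (hom z) (hom z) = dot z z - 1.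
Proof. by rewrite hom_mkv mink_mkv vbar_mkv vlast_mkv; ring. Qed.

Lemma Lf_pos d (z : vec d) : in_ball z -> 0 < Lf z.
Proof. rewrite /in_ball /Lf => h; apply: sqrt_lt_R0; lra. Qed.

Lemma Lf_sq d (z : vec d) : in_ball z -> Lf z * Lf z = 1 - dot z z.
Proof. rewrite /in_ball /Lf => h; apply: sqrt_sqrt; lra. Qed.

Lemma act_prop d (A : mmat d) z : in_Oplus A -> in_ball z ->
  0 < vlast (mapp A (hom z)) /\ in_ball (act A z) /\
  mapp A (hom z) = vscale (vlast (mapp A (hom z))) (hom (act A z)) /\
  vlast (mapp A (hom z)) = Lf z / Lf (act A z).
Proof.
move=> [Hpres Hsheet] hz.
set v := mapp A (hom z); set l := vlast v.
have hL := Lf_pos hz; have hL2 := Lf_sq hz; have hz' : dot z z < 1 := hz.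
have hl : 0 < l.
  have := Hsheet (vscale (/ Lf z) (hom z)).
  rewrite mink_vscalel mink_vscaler mink_hom mapp_vscale.
  rewrite /vlast /vscale -/(vlast (hom z)) hom_mkv vlast_mkv -/(vlast v) -/l.
  have e : / Lf z * (/ Lf z * (dot z z - 1)) = -1.
    have -> : dot z z - 1 = - (Lf z * Lf z) by lra.
    field; lra.
  move=> /(_ e); have : 0 < / Lf z by apply: Rinv_0_lt_compat.
  move=> h1 h2; apply: Rmult_lt_reg_l h1 _; rewrite Rmult_0_r; apply: h2.
  rewrite Rmult_1_r; exact: Rinv_0_lt_compat hL.
have hv : v = vscale l (hom (act A z)).
  apply: vec_eq.
    apply: functional_extensionality => k.
    rewrite /vscale /vbar /act hom_mkv /=.
    have := f_equal (fun f => f k) (vbar_mkv (act A z) 1).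
    rewrite /vbar /= => ->; rewrite /act -/v -/l; rewrite /vbar; field; lra.
  rewrite {2}/vlast /vscale. change (hom (act A z) ord_max) with (vlast (hom (act A z))). rewrite hom_mkv vlast_mkv -/l; ring.
have hm : mink v v = dot z z - 1 by rewrite /v Hpres mink_hom.
rewrite hv mink_vscalel mink_vscaler mink_hom in hm.
set y := act A z in hv hm *.
have hy : dot y y = 1 + (dot z z - 1) / (l * l).
  rewrite -hm; field; lra.
have hyb : in_ball y.
  rewrite /in_ball hy; have : 0 < l * l by nra.
  move=> h; have : (dot z z - 1) / (l * l) < 0.
    apply: Rmult_neg_pos; [lra|apply: Rinv_0_lt_compat; lra].
  lra.
have hLy : Lf y = Lf z / l.
  rewrite /Lf; rewrite -(sqrt_pow2 (Lf z / l)); last first.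
    apply: Rlt_le; apply: Rmult_lt_0_compat => //; apply: Rinv_0_lt_compat; lra.
  congr sqrt; rewrite hy /= Rmult_1_r.
  have -> : Lf z / l * (Lf z / l) = (Lf z * Lf z) / (l * l) by field; lra.
  rewrite hL2; field; lra.
split => //; split => //; split => //.
rewrite hLy; field; split; lra.
Qed.

Lemma sq_le_of_abs a r : Rabs a <= r -> a * a <= r * r.
Proof. move=> h; have := Rabs_pos a; split_Rabs; nra. Qed.

Lemma dot_nonneg n (u : vec n) : 0 <= dot u u.
Proof.
have := @rsum_le n (fun _ => 0) (fun i => u i * u i) (fun i => ltac:(nra)).
by rewrite rsum0.
Qed.

Lemma coord_small d (dl : R) : 0 < dl -> exists rho, 0 < rho /\
  forall u : vec d, (forall i, Rabs (u i) <= rho) -> enorm u < dl.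
Proof.
move=> hd; have hn := pos_INR d.
exists (dl / (INR d + 1)); split.
  apply: Rmult_lt_0_compat => //; apply: Rinv_0_lt_compat; lra.
move=> u hu; rewrite /enorm.
have h1 : dot u u <= INR d * (dl / (INR d + 1) * (dl / (INR d + 1))).
  rewrite -rsum_const; apply: rsum_le => i; exact: sq_le_of_abs.
have h2 : INR d * (dl / (INR d + 1) * (dl / (INR d + 1))) < dl * dl.
  have -> : INR d * (dl / (INR d + 1) * (dl / (INR d + 1))) =
            (dl * dl) * (INR d / ((INR d + 1) * (INR d + 1))) by field; lra.
  rewrite -{2}(Rmult_1_r (dl * dl)); apply: Rmult_lt_compat_l; first nra.
  apply/Rlt_div_l; nra.
rewrite -(sqrt_square dl); last lra.
apply: sqrt_lt_1; [|nra|lra].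
exact: dot_nonneg.
Qed.

Lemma ball_coord d (z : vec d) i : in_ball z -> Rabs (z i) <= 1.
Proof.
rewrite /in_ball => hz.
have h := @rsum_term d (fun j => z j * z j) i (fun j => ltac:(nra)).
rewrite -/(dot z z) in h.
have : z i * z i <= 1 by lra.
move=> h'; split_Rabs; nra.
Qed.

Lemma ball_open d (z : vec d) : in_ball z -> exists rho, 0 < rho /\
  forall u : vec d, (forall i, Rabs (u i) <= rho) -> in_ball (vadd z u).
Proof.
move=> hz; have hz' : dot z z < 1 := hz; have hn := pos_INR d.
set r := Rmin 1 ((1 - dot z z) / (3 * (INR d + 1))).
have hr0 : 0 < (1 - dot z z) / (3 * (INR d + 1)).
  apply: Rmult_lt_0_compat; [lra|apply: Rinv_0_lt_compat; lra].
have hr : 0 < r by apply: Rmin_glb_lt => //; lra.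
exists r; split => // u hu.
have hr1 : r <= 1 by apply: Rmin_l.
have hr2 : r <= (1 - dot z z) / (3 * (INR d + 1)) by apply: Rmin_r.
rewrite /in_ball.
have h1 : dot (vadd z u) (vadd z u) <= rsum (fun i => z i * z i + 3 * r).
  apply: rsum_le => i; rewrite /vadd.
  have := ball_coord i hz; have := hu i; move=> a b.
  have : Rabs (z i * u i) <= r.
    rewrite Rabs_mult; have := Rabs_pos (z i); have := Rabs_pos (u i); nra.
  have := sq_le_of_abs a; move=> c e; split_Rabs; nra.
rewrite rsum_add rsum_const -/(dot z z) in h1.
have : INR d * (3 * r) < 1 - dot z z.
  have h3 : INR d * (3 * r) <= INR d * (3 * ((1 - dot z z) / (3 * (INR d + 1)))).
    apply: Rmult_le_compat_l => //; lra.
  apply: Rle_lt_trans h3 _.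
  have -> : INR d * (3 * ((1 - dot z z) / (3 * (INR d + 1)))) =
     (1 - dot z z) * (INR d / (INR d + 1)) by field; lra.
  rewrite -{2}(Rmult_1_r (1 - dot z z)); apply: Rmult_lt_compat_l; first lra.
  apply/Rlt_div_l; lra.
lra.
Qed.

Lemma dpl_shift (F : R -> R) t0 l :
  derivable_pt_lim (fun s => F (t0 + s)) 0 l -> derivable_pt_lim F t0 l.
Proof.
move=> H eps he; have [dl Hd] := H eps he; exists dl => h hh hlt.
have := Hd h hh hlt; by rewrite Rplus_0_l Rplus_0_r.
Qed.

Lemma vadd_assoc_scale d (w e : vec d) s0 s :
  vadd (vadd w (vscale s0 e)) (vscale s e) = vadd w (vscale (s0 + s) e).
Proof. apply: functional_extensionality => i; rewrite /vadd /vscale; ring. Qed.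

Lemma vadd_zero_scale d (w e : vec d) : vadd w (vscale 0 e) = w.
Proof. apply: functional_extensionality => i; rewrite /vadd /vscale; ring. Qed.

Lemma partial_at d (f : vec d -> R) (Df : 'I_d -> vec d -> R) i w s0 :
  (forall z, in_ball z -> has_partial f i z (Df i z)) ->
  in_ball (vadd w (vscale s0 (basis i))) ->
  derivable_pt_lim (fun s => f (vadd w (vscale s (basis i)))) s0
     (Df i (vadd w (vscale s0 (basis i)))).
Proof.
move=> H hb; apply: dpl_shift; have := H _ hb; rewrite /has_partial.
have E : (fun t => f (vadd (vadd w (vscale s0 (basis i))) (vscale t (basis i)))) =
  (fun s => f (vadd w (vscale (s0 + s) (basis i)))).
  by apply: functional_extensionality => t; rewrite vadd_assoc_scale.
by rewrite E.
Qed.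

Lemma minmax_abs b c : Rmin 0 b <= c <= Rmax 0 b -> Rabs c <= Rabs b.
Proof. rewrite /Rmin /Rmax; case: Rle_dec => ? ?; split_Rabs; lra. Qed.

Definition trunc d k (X : vec d) : vec d := fun i => if (i < k)%N then X i else 0.

Section Line.
Variables (d : nat) (f : vec d -> R) (Df : 'I_d -> vec d -> R).
Hypothesis Hc : forall i, cont_on_ball (Df i).
Hypothesis Hp : forall i z, in_ball z -> has_partial f i z (Df i z).

Lemma line_trunc z X : in_ball z -> forall k,
  derivable_pt_lim (fun t => f (vadd z (vscale t (trunc k X)))) 0
    (rsum (fun i => if (i < k)%N then X i * Df i z else 0)).
Proof.
move=> hz; elim => [|k IH].
  have E : (fun t => f (vadd z (vscale t (trunc 0 X)))) = (fun _ => f z).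
    apply: functional_extensionality => t; congr f.
    apply: functional_extensionality => i; rewrite /vadd /vscale /trunc ltn0; ring.
  rewrite E (rsum_ext (G := fun _ => 0)) ?rsum0; first exact: derivable_pt_lim_const.
  by move=> i; rewrite ltn0.
case: (ltnP k d) => hk; last first.
  have E1 : trunc k.+1 X = trunc k X.
    apply: functional_extensionality => i; rewrite /trunc.
    by rewrite (leq_trans (ltn_ord i) hk) (leq_trans (ltn_ord i) (leqW hk)).
  rewrite E1 (rsum_ext (G := fun i => if (i < k)%N then X i * Df i z else 0)) //.
  by move=> i; rewrite (leq_trans (ltn_ord i) hk) (leq_trans (ltn_ord i) (leqW hk)).
set kk := Ordinal hk.
have Eq_kk : forall i : 'I_d, (i == kk) = (nat_of_ord i == k) by [].
have ET : forall t, vadd z (vscale t (trunc k.+1 X)) =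
    vadd (vadd z (vscale t (trunc k X))) (vscale (t * X kk) (basis kk)).
  move=> t; apply: functional_extensionality => i.
  rewrite /vadd /vscale /trunc /basis Eq_kk ltnS.
  case: (ltngtP i k) => hik; try ring.
  have -> : i = kk by apply: val_inj.
  ring.
have ES : rsum (fun i => if (i < k.+1)%N then X i * Df i z else 0) =
  rsum (fun i => if (i < k)%N then X i * Df i z else 0) + X kk * Df kk z.
  rewrite -(rsum_delta (fun i => X i * Df i z) kk) -rsum_add.
  apply: rsum_ext => i; rewrite Eq_kk ltnS.
  case: (ltngtP i k) => hik; try ring.
rewrite ES => eps he.
have he2 : 0 < eps / 2 by lra.
have [d1 Hd1] := IH (eps / 2) he2.
set Xk := X kk.
set M := 1 + rsum (fun i => Rabs (X i)).
have hM : forall i, Rabs (X i) <= M.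
  move=> i; have := @rsum_term d (fun i => Rabs (X i)) i (fun j => Rabs_pos _).
  rewrite /M; lra.
have hM0 : 0 < M.
  have := @rsum_le d (fun _ => 0) (fun i => Rabs (X i)) (fun i => Rabs_pos _).
  rewrite rsum0 /M; lra.
have hXk := Rabs_pos Xk.
set e' := eps / (2 * (Rabs Xk + 1)).
have he' : 0 < e'.
  apply: Rmult_lt_0_compat => //; apply: Rinv_0_lt_compat; lra.
have [dc [hdc Hdc]] := Hc kk hz he'.
have [r1 [hr1 Hr1]] := coord_small d hdc.
have [r2 [hr2 Hr2]] := ball_open hz.
set r := Rmin r1 r2.
have hr : 0 < r by apply: Rmin_glb_lt.
have hr0 : 0 < r / (2 * M).
  apply: Rmult_lt_0_compat => //; apply: Rinv_0_lt_compat; lra.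
have hdel : 0 < Rmin d1 (r / (2 * M)) by apply: Rmin_glb_lt => //; apply: cond_pos.
exists (mkposreal _ hdel) => t ht0 htd; rewrite /= in htd.
have ht1 : Rabs t < d1 by apply: Rlt_le_trans htd (Rmin_l _ _).
have ht2 : Rabs t < r / (2 * M) by apply: Rlt_le_trans htd (Rmin_r _ _).
set w := vadd z (vscale t (trunc k X)).
set e := basis kk.
have Hpt : forall s, Rabs s <= Rabs (t * Xk) ->
    in_ball (vadd w (vscale s e)) /\ enorm (vsub (vadd w (vscale s e)) z) < dc.
  move=> s hs.
  set u := vadd (vscale t (trunc k X)) (vscale s e).
  have Eu : vadd w (vscale s e) = vadd z u.
    apply: functional_extensionality => i; rewrite /w /u /vadd; ring.
  have hu : forall i, Rabs (u i) <= r.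
    move=> i; rewrite /u /vadd /vscale.
    apply: Rle_trans (Rabs_triang _ _) _; rewrite !Rabs_mult.
    have h1 : Rabs (trunc k X i) <= M.
      rewrite /trunc; case: ifP => _; first exact: hM.
      by rewrite Rabs_R0; lra.
    have h2 : Rabs (e i) <= 1.
      rewrite /e /basis; case: ifP => _; rewrite ?Rabs_R1 ?Rabs_R0; lra.
    have h3 : Rabs s <= Rabs t * M.
      apply: Rle_trans hs _; rewrite Rabs_mult.
      apply: Rmult_le_compat_l; [exact: Rabs_pos| exact: hM].
    have h4 : Rabs t * M < r / 2.
      have : Rabs t * (2 * M) < r.
        by move: ht2; rewrite /Rdiv => /(Rmult_lt_compat_r (2 * M)); rewrite Rmult_assoc Rinv_l; lra.
      lra.
    have := Rabs_pos t; have := Rabs_pos s; have := Rabs_pos (trunc k X i).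
    have := Rabs_pos (e i); nra.
  rewrite Eu; split.
    apply: Hr2 => i; apply: Rle_trans (hu i) (Rmin_r _ _).
  have -> : vsub (vadd z u) z = u.
    apply: functional_extensionality => i; rewrite /vsub /vadd; ring.
  apply: Hr1 => i; apply: Rle_trans (hu i) (Rmin_l _ _).
have Hder : forall s, Rmin 0 (t * Xk) < s < Rmax 0 (t * Xk) ->
    is_derive (fun s => f (vadd w (vscale s e))) s (Df kk (vadd w (vscale s e))).
  move=> s hs; apply/is_derive_Reals; apply: partial_at; first exact: Hp.
  apply: (proj1 (Hpt s _)); apply: minmax_abs; lra.
have Hcont : forall s, Rmin 0 (t * Xk) <= s <= Rmax 0 (t * Xk) ->
    continuity_pt (fun s => f (vadd w (vscale s e))) s.
  move=> s hs; apply: derivable_continuous_pt.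
  exists (Df kk (vadd w (vscale s e))); apply: partial_at; first exact: Hp.
  by apply: (proj1 (Hpt s _)); apply: minmax_abs.
have [c [hc hmvt]] := MVT_gen _ _ _ _ Hder Hcont.
have [hcb hcd] := Hpt c (minmax_abs hc).
have hcont := Hdc _ hcb hcd.
have hIH := Hd1 t ht0 ht1.
rewrite Rplus_0_l in hIH *.
rewrite ET vadd_zero_scale.
rewrite (vadd_zero_scale z (trunc k X)) in hIH.
rewrite vadd_zero_scale -/w -/e in hmvt; rewrite -/w -/e.
set S := rsum _ in hIH *.
have Ealg : (f (vadd w (vscale (t * Xk) e)) - f z) / t - (S + Xk * Df kk z) =
   ((f w - f z) / t - S) + Xk * (Df kk (vadd w (vscale c e)) - Df kk z).
  have -> : f (vadd w (vscale (t * Xk) e)) = f w + Df kk (vadd w (vscale c e)) * (t * Xk - 0) by lra.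
  field; lra.
rewrite Ealg; apply: Rle_lt_trans (Rabs_triang _ _) _.
rewrite Rabs_mult.
have : Rabs Xk * Rabs (Df kk (vadd w (vscale c e)) - Df kk z) <= Rabs Xk * e'.
  apply: Rmult_le_compat_l => //; lra.
have : Rabs Xk * e' < eps / 2.
  rewrite /e'; have -> : Rabs Xk * (eps / (2 * (Rabs Xk + 1))) = (eps / 2) * (Rabs Xk / (Rabs Xk + 1)) by field; lra.
  rewrite -{2}(Rmult_1_r (eps / 2)); apply: Rmult_lt_compat_l => //.
  apply/Rlt_div_l; lra.
rewrite -/w in hIH; lra.
Qed.

Lemma line0 z X : in_ball z ->
  derivable_pt_lim (fun t => f (vadd z (vscale t X))) 0 (rsum (fun i => X i * Df i z)).
Proof.
move=> hz; have := line_trunc X hz d.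
have -> : trunc d X = X.
  by apply: functional_extensionality => i; rewrite /trunc ltn_ord.
by rewrite (rsum_ext (G := fun i => X i * Df i z)) // => i; rewrite ltn_ord.
Qed.

Lemma line_deriv z X t0 : in_ball (vadd z (vscale t0 X)) ->
  derivable_pt_lim (fun t => f (vadd z (vscale t X))) t0
    (rsum (fun i => X i * Df i (vadd z (vscale t0 X)))).
Proof.
move=> hz; apply: dpl_shift; have := line0 X hz.
have E : (fun t => f (vadd (vadd z (vscale t0 X)) (vscale t X))) =
  (fun s => f (vadd z (vscale (t0 + s) X))).
  by apply: functional_extensionality => t; rewrite vadd_assoc_scale.
by rewrite E.
Qed.

End Line.

Lemma deriv_k (F F1 : R -> R) p q t : p + t * q <> 0 ->
  is_derive F (t / (p + t * q)) (F1 (t / (p + t * q))) ->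
  is_derive (fun t => (p + t * q) * F (t / (p + t * q))) t
    (q * F (t / (p + t * q)) + p * F1 (t / (p + t * q)) / (p + t * q)).
Proof.
move=> hne hF.
have hF' : ex_derive F (t / (p + t * q)) by exists (F1 (t / (p + t * q))).
auto_derive; first by split.
rewrite (is_derive_unique _ _ _ hF); rewrite /Rdiv; field; lra.
Qed.

Lemma deriv_k1 (F F1 F2 : R -> R) p q t : p + t * q <> 0 ->
  is_derive F (t / (p + t * q)) (F1 (t / (p + t * q))) ->
  is_derive F1 (t / (p + t * q)) (F2 (t / (p + t * q))) ->
  is_derive (fun t => q * F (t / (p + t * q)) + p * F1 (t / (p + t * q)) / (p + t * q)) t
    (p * p * F2 (t / (p + t * q)) / ((p + t * q) * (p + t * q) * (p + t * q))).
Proof.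
move=> hne hF hF1.
have hF' : ex_derive F (t / (p + t * q)) by exists (F1 (t / (p + t * q))).
have hF1' : ex_derive F1 (t / (p + t * q)) by exists (F2 (t / (p + t * q))).
auto_derive; first by repeat split.
rewrite (is_derive_unique _ _ _ hF) (is_derive_unique _ _ _ hF1).
rewrite /Rdiv; field; lra.
Qed.

Lemma rsum_ord0 (F : 'I_0 -> R) : rsum F = 0.
Proof. by rewrite /rsum big_ord0. Qed.

Lemma is_derive_rsum n (F : 'I_n -> R -> R) (l : 'I_n -> R) t :
  (forall i, is_derive (F i) t (l i)) ->
  is_derive (fun x => rsum (fun i => F i x)) t (rsum l).
Proof.
elim: n F l => [|n IH] F l H.
  rewrite rsum_ord0; apply: (is_derive_ext (fun _ => 0)).
    by move=> x; rewrite rsum_ord0.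
  exact: is_derive_const.
rewrite rsum_recr.
apply: (is_derive_ext (fun x => rsum (fun k : 'I_n => F (widen_ord (leqnSn n) k) x) + F ord_max x)).
  by move=> x; rewrite rsum_recr.
apply: is_derive_plus; last exact: H.
by apply: IH => i; exact: H.
Qed.

Definition zv d : vec d := fun _ => 0.
Arguments zv : clear implicits.

Lemma vbar_vadd d (u v : vec d.+1) i : vbar (vadd u v) i = vbar u i + vbar v i.
Proof. by []. Qed.
Lemma vbar_vscale d c (u : vec d.+1) i : vbar (vscale c u) i = c * vbar u i.
Proof. by []. Qed.
Lemma vlast_vadd d (u v : vec d.+1) : vlast (vadd u v) = vlast u + vlast v.
Proof. by []. Qed.
Lemma vlast_vscale d c (u : vec d.+1) : vlast (vscale c u) = c * vlast u.
Proof. by []. Qed.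
Lemma vbar_mkv_i d (a : vec d) r i : vbar (mkv a r) i = a i.
Proof. by rewrite vbar_mkv. Qed.
Lemma vbar_hom_i d (a : vec d) i : vbar (hom a) i = a i.
Proof. by rewrite hom_mkv vbar_mkv. Qed.
Lemma vlast_hom d (a : vec d) : vlast (hom a) = 1.
Proof. by rewrite hom_mkv vlast_mkv. Qed.

Lemma hom_line d (z X : vec d) t :
  hom (vadd z (vscale t X)) = vadd (hom z) (vscale t (mkv X 0)).
Proof.
apply: vec_eq.
  apply: functional_extensionality => i.
  by rewrite vbar_vadd vbar_vscale !vbar_hom_i vbar_mkv_i.
by rewrite vlast_vadd vlast_vscale !vlast_hom vlast_mkv; ring.
Qed.

Lemma vadd_zero d (v : vec d) : vadd (zv d) v = v.
Proof. apply: functional_extensionality => i; rewrite /vadd /zv; ring. Qed.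

Lemma in_ball_zero d : in_ball (zv d).
Proof. rewrite /in_ball dot_zero; lra. Qed.

Lemma in_ball_seg d (z : vec d) t : in_ball z -> 0 <= t <= 1 ->
  in_ball (vadd (zv d) (vscale t z)).
Proof.
rewrite /in_ball vadd_zero dot_vscalel dot_vscaler => hz ht.
have hD := dot_nonneg z; have ht2 : t * t <= 1 by nra. have : (1 - t * t) * dot z z >= 0 by apply: Rle_ge; apply: Rmult_le_pos; lra. nra.
Qed.

Lemma Hess_scale d (D2 : 'I_d -> 'I_d -> vec d -> R) x a b X Y :
  Hess D2 x (vscale a X) (vscale b Y) = a * b * Hess D2 x X Y.
Proof.
rewrite /Hess rsum_scal; apply: rsum_ext => i; rewrite rsum_scal; apply: rsum_ext => j.
rewrite /vscale; ring.
Qed.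

Lemma act_inv d (A B : mmat d) x : in_Oplus B -> (forall v, mapp A (mapp B v) = v) ->
  in_ball x -> act A (act B x) = x /\
  mapp A (hom (act B x)) = vscale (/ vlast (mapp B (hom x))) (hom x).
Proof.
move=> HB HAB hx; have [hl [hy [hv hL]]] := act_prop HB hx.
set l := vlast (mapp B (hom x)) in hl hv hL *.
have e : mapp A (hom (act B x)) = vscale (/ l) (hom x).
  have := f_equal (mapp A) hv; rewrite HAB mapp_vscale => ->.
  apply: functional_extensionality => i; rewrite /vscale; field; lra.
split => //; apply: functional_extensionality => i.
rewrite /act e vbar_vscale vlast_vscale vbar_hom_i vlast_hom.
have hl0 : l <> 0 by lra. have := Rinv_neq_0_compat _ hl0. move=> ?. field; auto.
Qed.

Section Main.
Variables (d : nat) (h : vec d -> R) (Dh : 'I_d -> vec d -> R)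
  (D2h : 'I_d -> 'I_d -> vec d -> R).
Hypothesis HC : C2_with h Dh D2h.

Lemma deriv_h1 z X t : in_ball (vadd z (vscale t X)) ->
  is_derive (fun t => h (vadd z (vscale t X))) t
    (rsum (fun i => X i * Dh i (vadd z (vscale t X)))).
Proof.
move: HC => [_ [Hc1 [_ [Hp1 _]]]] hb; apply/is_derive_Reals.
exact: line_deriv.
Qed.

Lemma deriv_h2 z X t : in_ball (vadd z (vscale t X)) ->
  is_derive (fun t => rsum (fun i => X i * Dh i (vadd z (vscale t X)))) t
    (Hess D2h (vadd z (vscale t X)) X X).
Proof.
move: HC => [_ [_ [Hc2 [_ Hp2]]]] hb.
have -> : Hess D2h (vadd z (vscale t X)) X X =
   rsum (fun i => X i * rsum (fun j => X j * D2h i j (vadd z (vscale t X)))).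
  rewrite /Hess; apply: rsum_ext => i; rewrite rsum_scal; apply: rsum_ext => j; ring.
apply: is_derive_rsum => i.
apply: (is_derive_scal (fun t => Dh i (vadd z (vscale t X)))).
apply/is_derive_Reals.
exact: (@line_deriv d (Dh i) (D2h i) (fun j => Hc2 i j) (fun j x hx => Hp2 i j x hx)).
Qed.


Variables A B : mmat d.
Hypothesis HA : in_Oplus A.
Hypothesis HB : in_Oplus B.
Hypothesis HAB : forall v, mapp A (mapp B v) = v.
Hypothesis HBA : forall v, mapp B (mapp A v) = v.
Hypothesis Hinv : forall (x X Y V W : vec d), in_ball x ->
     has_dir_deriv (act A) x X V -> has_dir_deriv (act A) x Y W ->
     / Lf x * Hess D2h x X Y = / Lf (act A x) * Hess D2h (act A x) V W.

Definition P := mapp B (hom (zv d)).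
Definition p := vlast P.
Definition y0 := act B (zv d).
Definition Qv z := mapp B (mkv z 0).
Definition qv z := vlast (Qv z).
Definition cv z : vec d := fun i => vbar (Qv z) i - qv z * y0 i.
Definition Ff z s := h (vadd y0 (vscale s (cv z))).
Definition F1 z s := rsum (fun i => cv z i * Dh i (vadd y0 (vscale s (cv z)))).
Definition F2 z s := Hess D2h (vadd y0 (vscale s (cv z))) (cv z) (cv z).
Definition line z t := vadd (zv d) (vscale t z).
Definition phit z t := h (vadd (zv d) (vscale t z)) -
  (p + t * qv z) * Ff z (t / (p + t * qv z)).
Definition phi1 z t := rsum (fun i => z i * Dh i (vadd (zv d) (vscale t z))) -
  (qv z * Ff z (t / (p + t * qv z)) + p * F1 z (t / (p + t * qv z)) / (p + t * qv z)).
Definition g x := h x - vlast (mapp B (hom x)) * h (act B x).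

Lemma hp : 0 < p.
Proof. by have [] := act_prop HB (in_ball_zero d). Qed.

Lemma y0_i i : y0 i = vbar P i / p.
Proof. by []. Qed.

Lemma mapp_line z t : mapp B (hom (line z t)) = vadd P (vscale t (Qv z)).
Proof. by rewrite /line hom_line mapp_vadd mapp_vscale. Qed.

Lemma line_act z t : in_ball (line z t) ->
  0 < p + t * qv z /\ act B (line z t) = vadd y0 (vscale (t / (p + t * qv z)) (cv z)) /\
  in_ball (vadd y0 (vscale (t / (p + t * qv z)) (cv z))) /\
  vlast (mapp B (hom (line z t))) = p + t * qv z.
Proof.
move=> hb; have [hl [hy [_ _]]] := act_prop HB hb.
have el : vlast (mapp B (hom (line z t))) = p + t * qv z.
  by rewrite mapp_line vlast_vadd vlast_vscale.
rewrite el in hl.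
have ea : act B (line z t) = vadd y0 (vscale (t / (p + t * qv z)) (cv z)).
  apply: functional_extensionality => i.
  rewrite /act el mapp_line vbar_vadd vbar_vscale /vadd /vscale /cv y0_i.
  have := hp; rewrite /qv /p => hp'; rewrite /p /qv in hl *.
  field; lra.
by rewrite -ea; split.
Qed.

Lemma g_phit z t : in_ball (line z t) -> g (line z t) = phit z t.
Proof.
move=> hb; have [_ [ea [_ el]]] := line_act hb.
by rewrite /g ea el /phit /Ff.
Qed.

Lemma deriv1 z t : in_ball (line z t) -> is_derive (phit z) t (phi1 z t).
Proof.
move=> hb; have [hl [ea [hy el]]] := line_act hb.
apply: is_derive_minus; first exact: deriv_h1.
apply: deriv_k; first lra.
exact: deriv_h1.
Qed.

Lemma key z t : in_ball (line z t) ->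
  F2 z (t / (p + t * qv z)) =
  (p + t * qv z) * (p + t * qv z) * (p + t * qv z) / (p * p) * Hess D2h (line z t) z z.
Proof.
move=> hb; have [hl [ea [hy el]]] := line_act hb.
have hp0 := hp.
have [hinvA hmA] := act_inv HB HAB hb.
have [_ [_ [_ hLf]]] := act_prop HB hb.
rewrite ea el in hinvA hmA hLf.
set lam := p + t * qv z in hl hinvA hmA hLf hy *.
set s := t / lam in hinvA hmA hLf hy *.
set y := vadd y0 (vscale s (cv z)) in hinvA hmA hLf hy *.
have emk : mkv (cv z) 0 = vadd (Qv z) (vscale (-(qv z / p)) P).
  apply: vec_eq.
    apply: functional_extensionality => i.
    rewrite vbar_mkv_i vbar_vadd vbar_vscale /cv y0_i /qv.
    field; lra.
  rewrite vlast_mkv vlast_vadd vlast_vscale /qv -/p; field; lra.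
have emA : mapp A (mkv (cv z) 0) = vadd (mkv z 0) (vscale (-(qv z / p)) (hom (zv d))).
  by rewrite emk mapp_vadd mapp_vscale /Qv /P !HAB.
have hdd : has_dir_deriv (act A) y (cv z) (vscale (lam * lam / p) z).
  move=> i; apply/is_derive_Reals.
  apply: (is_derive_ext (fun u => (/ lam * (0 + t * z i) + u * (z i + -(qv z / p) * 0)) /
       (/ lam * 1 + u * (0 + -(qv z / p) * 1)))).
    move=> u; rewrite /act hom_line mapp_vadd mapp_vscale hmA emA.
    rewrite !vbar_vadd !vbar_vscale !vlast_vadd !vlast_vscale vbar_mkv_i vlast_mkv.
    rewrite ?vbar_vadd ?vbar_vscale ?vlast_vadd ?vlast_vscale ?vbar_mkv_i ?vlast_mkv ?vbar_hom_i ?vlast_hom.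
    by rewrite /line /vadd /vscale /zv.
  have hil : 0 < / lam by apply: Rinv_0_lt_compat.
  auto_derive.
    lra.
  have hl' : 0 < p + t * qv z := hl.
  rewrite /vscale /lam; field; split; lra.
have := Hinv hy hdd hdd.
rewrite hinvA Hess_scale.
have hL1 : 0 < Lf (line z t) by apply: Lf_pos.
have hL2 : 0 < Lf y by apply: Lf_pos.
rewrite /F2 -/s -/y.
move=> E.
have E' : Hess D2h y (cv z) (cv z) = Lf y * (/ Lf (line z t) *
   (lam * lam / p * (lam * lam / p) * Hess D2h (line z t) z z)).
  rewrite -E; field; lra.
rewrite E'.
have -> : Lf y = Lf (line z t) / lam by rewrite hLf; field; split; lra.
field; repeat split; lra.
Qed.

Lemma deriv2 z t : in_ball (line z t) -> is_derive (phi1 z) t 0.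
Proof.
move=> hb; have [hl [ea [hy el]]] := line_act hb.
have hp0 := hp.
have hd := is_derive_minus _ _ _ _ _ (deriv_h2 hb)
  (deriv_k1 (F := Ff z) (F1 := F1 z) (F2 := F2 z) (p := p) (q := qv z) (t := t)
    ltac:(lra) (deriv_h1 hy) (deriv_h2 hy)).
rewrite key // in hd.
have E : Hess D2h (line z t) z z -
   p * p * ((p + t * qv z) * (p + t * qv z) * (p + t * qv z) / (p * p) *
     Hess D2h (line z t) z z) /
   ((p + t * qv z) * (p + t * qv z) * (p + t * qv z)) = 0.
  field; split; lra.
rewrite /minus /plus /opp /= in hd.
rewrite -E; exact: hd.
Qed.

Lemma line1 z : line z 1 = z.
Proof. apply: functional_extensionality => i; rewrite /line /vadd /vscale /zv; ring. Qed.
Lemma line0' z : line z 0 = zv d.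
Proof. apply: functional_extensionality => i; rewrite /line /vadd /vscale /zv; ring. Qed.

Lemma g_affine z : in_ball z -> g z = g (zv d) + phi1 z 0.
Proof.
move=> hz; have hseg : forall t, 0 <= t <= 1 -> in_ball (line z t).
  by move=> t ht; apply: in_ball_seg.
have Hd1 : forall x, Rmin 0 1 < x < Rmax 0 1 -> is_derive (phit z) x (phi1 z x).
  move=> x; rewrite Rmin_left ?Rmax_right; try lra.
  move=> hx; apply: deriv1; apply: hseg; lra.
have Hc1 : forall x, Rmin 0 1 <= x <= Rmax 0 1 -> continuity_pt (phit z) x.
  move=> x; rewrite Rmin_left ?Rmax_right; try lra.
  move=> hx; apply: derivable_continuous_pt; exists (phi1 z x).
  apply/is_derive_Reals; apply: deriv1; apply: hseg; lra.
have [xi [hxi E1]] := MVT_gen _ _ _ _ Hd1 Hc1.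
rewrite Rmin_left ?Rmax_right in hxi; try lra.
have Hd2 : forall x, Rmin 0 xi < x < Rmax 0 xi -> is_derive (phi1 z) x 0.
  move=> x; rewrite Rmin_left ?Rmax_right; try lra.
  move=> hx; apply: deriv2; apply: hseg; lra.
have Hc2 : forall x, Rmin 0 xi <= x <= Rmax 0 xi -> continuity_pt (phi1 z) x.
  move=> x; rewrite Rmin_left ?Rmax_right; try lra.
  move=> hx; apply: derivable_continuous_pt; exists 0.
  apply/is_derive_Reals; apply: deriv2; apply: hseg; lra.
have [xi2 [_ E2]] := MVT_gen (phi1 z) 0 xi (fun _ => 0) Hd2 Hc2.
rewrite -{1}(line1 z) -(line0' z) !g_phit; try (apply: hseg; lra).
lra.
Qed.

Lemma rsum_sub n (F G : 'I_n -> R) : rsum (fun i => F i - G i) = rsum F - rsum G.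
Proof.
rewrite (rsum_ext (G := fun i => F i + (-1) * G i)); last by move=> i; ring.
rewrite rsum_add -rsum_scal; ring.
Qed.

Lemma mapp_mkv0 (C : mmat d) z j :
  mapp C (mkv z 0) j = rsum (fun k => C j (widen_ord (leqnSn d) k) * z k).
Proof.
rewrite /mapp rsum_recr.
have -> : mkv z 0 ord_max = 0 by exact: (vlast_mkv z 0).
rewrite Rmult_0_r Rplus_0_r; apply: rsum_ext => k.
by rewrite -(vbar_mkv_i z 0 k).
Qed.

Definition wd (k : 'I_d) : 'I_d.+1 := widen_ord (leqnSn d) k.

Definition avec : vec d := fun k => Dh k (zv d) - B ord_max (wd k) * h y0 -
  rsum (fun i => (B (wd i) (wd k) - B ord_max (wd k) * y0 i) * Dh i y0).

Lemma phi1_0 z : phi1 z 0 = dot z avec.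
Proof.
have hp0 := hp.
rewrite /phi1 (_ : 0 / (p + 0 * qv z) = 0); last by rewrite /Rdiv Rmult_0_l.
rewrite /Ff /F1 !vadd_zero_scale.
have -> : p * rsum (fun i => cv z i * Dh i y0) / (p + 0 * qv z) =
   rsum (fun i => cv z i * Dh i y0) by field; lra.
rewrite /cv /qv /Qv /vlast mapp_mkv0.
rewrite (rsum_ext (F := fun i => (vbar (mapp B (mkv z 0)) i -
   rsum (fun k => B ord_max (widen_ord (leqnSn d) k) * z k) * y0 i) * Dh i y0)
   (G := fun i => rsum (fun k => z k * ((B (wd i) (wd k) - B ord_max (wd k) * y0 i) * Dh i y0)))); last first.
  move=> i; rewrite /vbar mapp_mkv0 rsum_scalr -rsum_sub rsum_scalr.
  by apply: rsum_ext => k; rewrite /wd; ring.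
rewrite rsum_swap rsum_scalr /dot.
rewrite -rsum_add -rsum_sub; apply: rsum_ext => k.
rewrite /avec /= !Rmult_minus_distr_l rsum_scal /wd; ring.
Qed.

Lemma exists_w : exists w, forall z, in_ball z ->
  vlast (mapp B (hom z)) * h (act B z) + mink (hom z) w = h z.
Proof.
exists (mkv avec (- g (zv d))) => z hz.
rewrite hom_mkv mink_mkv vbar_mkv vlast_mkv -hom_mkv.
rewrite -phi1_0.
have := g_affine hz; rewrite /g; lra.
Qed.
End Main.

Lemma mat_eq d (M N : mmat d) : (forall v, mapp M v = mapp N v) -> M = N.
Proof.
move=> H; apply: functional_extensionality => i; apply: functional_extensionality => j.
have := f_equal (fun f => f i) (H (basis j)).
by rewrite /mapp /basis !rsum_delta'.
Qed.

Lemma mink_hom_eq d (u v : vec d.+1) :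
  (forall z, in_ball z -> mink (hom z) u = mink (hom z) v) -> u = v.
Proof.
move=> H.
have := @mink_hom_zero d (vadd u (vscale (-1) v)).
rewrite /=; move=> H0.
have e : vadd u (vscale (-1) v) = fun _ => 0.
  by apply: H0 => z hz; rewrite mink_vaddr mink_vscaler H //; ring.
apply: functional_extensionality => i.
have := f_equal (fun f => f i) e; rewrite /vadd /vscale /=; lra.
Qed.

Lemma mink_hom_dot d (z : vec d) w : mink (hom z) w = dot z (vbar w) - vlast w.
Proof. by rewrite hom_mkv mink_mkv; ring. Qed.

Lemma conv d (B : mmat d) (h : vec d -> R) z w : in_Oplus B -> in_ball z ->
  Lf z / Lf (act B z) * h (act B z) + dot z (vbar w) - vlast w =
  vlast (mapp B (hom z)) * h (act B z) + mink (hom z) w.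
Proof.
move=> HB hz; have [_ [_ [_ ->]]] := act_prop HB hz.
rewrite mink_hom_dot; ring.
Qed.

Theorem lemma3p9 (d : nat) (G : mmat d -> Prop) (h : vec d -> R)
    (Dh : 'I_d -> vec d -> R) (D2h : 'I_d -> 'I_d -> vec d -> R) :
  (2 <= d)%N -> is_subgroup G -> free_action G -> prop_discontinuous G ->
  cocompact G -> C2_with h Dh D2h ->
  (forall (A : mmat d) (x X Y V W : vec d), G A -> in_ball x ->
     has_dir_deriv (act A) x X V -> has_dir_deriv (act A) x Y W ->
     / Lf x * Hess D2h x X Y = / Lf (act A x) * Hess D2h (act A x) V W) ->
  exists tau : mmat d -> vec d.+1,
    cocycle G tau /\ equivariant G tau h /\
    (forall tau' : mmat d -> vec d.+1, cocycle G tau' -> equivariant G tau' h ->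
       forall A, G A -> tau' A = tau A).
Proof.
move=> _ [Hsub [Hid [Hmul Hinvex]]] _ _ _ HC Hinv.
set Ew := fun (Bm : mmat d) (w : vec d.+1) => forall z, in_ball z ->
  vlast (mapp Bm (hom z)) * h (act Bm z) + mink (hom z) w = h z.
have inv_unique : forall A B B', mmul B A = mid d -> mmul A B' = mid d -> B' = B.
  move=> A B B' e1 e2; apply: mat_eq => v.
  rewrite -[v in RHS](mapp_mid v) -e2 mapp_mmul.
  by rewrite -[LHS](mapp_mid) -e1 mapp_mmul.
have Hex : forall A, exists w : vec d.+1, G A -> forall B, mmul A B = mid d -> Ew B w.
  move=> A; case: (classic (G A)) => hA; last by exists (fun _ => 0).
  have [B [hB [e1 e2]]] := Hinvex A hA.
  have HB := Hsub B hB.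
  have HAB : forall v, mapp A (mapp B v) = v by move=> v; rewrite -mapp_mmul e1 mapp_mid.
  have [w Hw] := exists_w HC HB HAB (fun x X Y V W => Hinv A x X Y V W hA).
  exists w => _ B' e3.
  by rewrite (inv_unique A B B' e2 e3).
pose tau := fun A => proj1_sig (constructive_indefinite_description _ (Hex A)).
have Htau : forall A, G A -> forall B, mmul A B = mid d -> Ew B (tau A).
  by move=> A; exact: (proj2_sig (constructive_indefinite_description _ (Hex A))).
have Ew_uniq : forall B w w', Ew B w -> Ew B w' -> w = w'.
  move=> B w w' H1 H2; apply: mink_hom_eq => z hz.
  have := H1 z hz; have := H2 z hz; lra.
have Eq_equiv : forall tau' A B, G A -> mmul A B = mid d ->
    (forall x, in_ball x ->
      Lf x / Lf (act B x) * h (act B x) + dot x (vbar (tau' A)) - vlast (tau' A) = h x) ->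
    Ew B (tau' A).
  move=> tau' A B hA e H z hz.
  have [B0 [hB0 [e1 e2]]] := Hinvex A hA.
  have eB := inv_unique A B0 B e2 e.
  rewrite eB in H *; rewrite -conv //; [exact: H | exact: Hsub].
exists tau; split; last split.
- move=> A1 A2 hA1 hA2.
  have [B1 [hB1 [e11 e12]]] := Hinvex A1 hA1.
  have [B2 [hB2 [e21 e22]]] := Hinvex A2 hA2.
  have HB1 := Hsub B1 hB1; have HB2 := Hsub B2 hB2.
  have e3 : mmul (mmul A1 A2) (mmul B2 B1) = mid d.
    apply: mat_eq => v; rewrite !mapp_mmul -(mapp_mmul A2) e21 mapp_mid.
    by rewrite -mapp_mmul e11.
  have H12 := Htau _ (Hmul _ _ hA1 hA2) _ e3.
  have H1 := Htau _ hA1 _ e11.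
  have H2 := Htau _ hA2 _ e21.
  apply: (Ew_uniq (mmul B2 B1)) => // z hz.
  have [hl1 [hy1 [hv1 _]]] := act_prop HB1 hz.
  set l1 := vlast (mapp B1 (hom z)) in hl1 hv1.
  set y1 := act B1 z in hy1 hv1.
  have hm : mapp (mmul B2 B1) (hom z) = vscale l1 (mapp B2 (hom y1)).
    by rewrite mapp_mmul hv1 mapp_vscale.
  have ha : act (mmul B2 B1) z = act B2 y1.
    apply: functional_extensionality => i; rewrite /act hm vbar_vscale vlast_vscale.
    have [hl2 _] := act_prop HB2 hy1.
    field; lra.
  have hmk : l1 * mink (hom y1) (tau A2) = mink (hom z) (mapp A1 (tau A2)).
    rewrite -mink_vscalel -hv1.
    have [Hpres _] := Hsub A1 hA1.
    by rewrite -Hpres -mapp_mmul e11 mapp_mid.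
  rewrite hm vlast_vscale ha mink_vaddr -hmk.
  have := H1 z hz; have := H2 y1 hy1; rewrite -/l1 -/y1.
  move=> E2 E1; rewrite -E1 -E2; ring.
- move=> A hA B e x hx.
  have [B0 [hB0 [e1 e2]]] := Hinvex A hA.
  have eB := inv_unique A B0 B e2 e.
  rewrite eB conv //; last exact: Hsub.
  by apply: Htau; rewrite // -eB.
- move=> tau' _ Heq A hA.
  have [B [hB [e1 e2]]] := Hinvex A hA.
  apply: (Ew_uniq B); last exact: Htau.
  exact: (Eq_equiv tau' A B hA e1 (Heq A hA B e1)).
Qed.
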